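(* For every positive integer $r$, there exists a $2$-coverable connected binary matroid $M$ of rank $r$ such that in any rainbow circuit-free coloring of $M$ in which each color is used at most three times, the number of colors is at most $\lceil 6r/7\rceil$.
   Context: A coloring of the ground set is a partition into nonempty color classes; it is rainbow circuit-free if no circuit of $M$ has all its elements of pairwise different colors. A matroid is $k$-coverable if its ground set can be covered by at most $k$ independent sets. A matroid is connected if any two elements lie in a common circuit. A matroid is binary if it is representable over $GF(2)$. *)

(* Defs.v *)
(* Binary matroids are given as column (vector) matroids over GF(2):
   a family of vectors A : E -> 'rV['F_2]_m indexed by a finite ground set E. *)
From HB Require Import structures.
From mathcomp Require Import all_boot all_order all_algebra.
Set Implicit Arguments. Unset Strict Implicit. Unset Printing Implicit Defensive.
Import GRing.Theory.
Local Open Scope ring_scope.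

Section BinaryMatroid.
Variables (E : finType) (m : nat) (A : E -> 'rV['F_2]_m).

Definition mindep (S : {set E}) : Prop :=
  forall c : E -> 'F_2, \sum_(e in S) c e *: A e = 0 -> forall e, e \in S -> c e = 0.

Definition mcircuit (C : {set E}) : Prop :=
  ~ mindep C /\ forall e, e \in C -> mindep (C :\ e).

Definition mrank_is (r : nat) : Prop :=
  (exists B : {set E}, mindep B /\ #|B| = r) /\
  (forall S : {set E}, mindep S -> (#|S| <= r)%N).

Definition mcoverable (k : nat) : Prop :=
  exists I : seq {set E}, (size I <= k)%N /\ (forall S, S \in I -> mindep S) /\
    (forall e : E, exists2 S, S \in I & e \in S).

Definition mconnected : Prop :=
  forall x y : E, x != y -> exists C : {set E}, mcircuit C /\ x \in C /\ y \in C.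

(* a coloring is a partition P of the ground set into nonempty color classes
   (mathcomp's [partition] excludes the empty block); it is rainbow circuit-free
   if no circuit meets every color class in at most one element *)
Definition rainbow_circuit_free (P : {set {set E}}) : Prop :=
  forall C : {set E}, mcircuit C -> ~ (forall B, B \in P -> (#|C :&: B| <= 1)%N).

End BinaryMatroid.

(* Main.v *)
Require Import Defs.
From HB Require Import structures.
From mathcomp Require Import all_boot all_order all_algebra.
From mathcomp Require Import zify.
Set Implicit Arguments. Unset Strict Implicit. Unset Printing Implicit Defensive.
Import GRing.Theory.

Section Gen.
Local Open Scope ring_scope.
Variables (E : finType) (m : nat).

Lemma one_removal (A : E -> 'rV['F_2]_m) (C : {set E}) e0 :
  \sum_(e in C) A e = 0 -> e0 \in C -> mindep A (C :\ e0) -> mcircuit A C.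
Proof.
move=> H0 e0C Hi; split.
  move=> Hd; have := Hd (fun _ => 1).
  rewrite (eq_bigr (fun e => A e)) => [|e _]; last by rewrite scale1r.
  by move/(_ H0 e0 e0C)/eqP; rewrite oner_eq0.
move=> e eC c Hc e' e'C.
case: (eqVneq e e0) => [Ee|nee0]; first by rewrite Ee in Hc e'C; exact: Hi c Hc e' e'C.
pose d := fun x => (if x == e then 0 else c x) - c e0.
have Hd' : \sum_(x in C) d x *: A x = 0.
  rewrite /d; under eq_bigr do rewrite scalerBl.
  rewrite sumrB -scaler_sumr H0 scaler0 subr0.
  rewrite (big_setD1 e eC) /= eqxx scale0r add0r -{2}Hc.
  by apply: eq_bigr => x /setD1P [/negbTE -> _].
have Hd : \sum_(x in C :\ e0) d x *: A x = 0.
  move: Hd'; rewrite (big_setD1 e0 e0C) /d /=.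
  by rewrite eq_sym (negbTE nee0) subrr scale0r add0r.
have Hi' := Hi d Hd.
have ce0 : c e0 = 0.
  have := Hi' e; rewrite !inE eC nee0 /= => /(_ isT).
  by rewrite /d eqxx sub0r => /eqP; rewrite oppr_eq0 => /eqP.
case: (eqVneq e' e0) => [->//|ne'0].
have := Hi' e'; rewrite !inE ne'0.
move: e'C; rewrite !inE => /andP [ne'e e'C]; rewrite e'C /= => /(_ isT).
by rewrite /d (negbTE ne'e) ce0 subr0.
Qed.

Lemma indep_card (A : E -> 'rV['F_2]_m) (S : {set E}) : mindep A S -> (#|S| <= m)%N.
Proof.
move=> Hi.
pose phi := fun T : {set E} => \sum_(e in T) A e.
have Hs : forall T : {set E}, T \subset S -> \sum_(e in S) (e \in T)%:R *: A e = phi T.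
  move=> T TS; rewrite /phi.
  rewrite (eq_bigr (fun e => if e \in T then A e else 0)); last first.
    by move=> e _; case: (e \in T); rewrite ?scale1r ?scale0r.
  rewrite -big_mkcondr; apply: eq_bigl => e.
  by case eT: (e \in T); rewrite ?andbT ?andbF // (subsetP TS e eT).
have inj : {in powerset S &, injective phi}.
  move=> T T'; rewrite !inE => TS T'S eqT; apply/setP => e.
  pose c := fun e => (e \in T)%:R - (e \in T')%:R : 'F_2.
  have Hc : \sum_(e in S) c e *: A e = 0.
    rewrite /c; under eq_bigr do rewrite scalerBl.
    by rewrite sumrB Hs // Hs // eqT subrr.
  case eS: (e \in S); last first.
    by rewrite (contraFF (subsetP TS e)) ?eS // (contraFF (subsetP T'S e)) ?eS.
  have := Hi c Hc e eS; rewrite /c => /eqP; rewrite subr_eq0.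
  by case: (e \in T); case: (e \in T') => //= /eqP; rewrite ?oner_eq0 // eq_sym oner_eq0.
have := card_in_imset inj; rewrite card_powerset => H.
have : (#|phi @: powerset S| <= #|{: 'rV['F_2]_m}|)%N by apply: max_card.
rewrite H card_mx card_Fp // mul1n.
by rewrite leq_exp2l.
Qed.

Variable (b : E -> nat -> bool).
Definition Ab (e : E) : 'rV['F_2]_m := \row_(j < m) (b e j)%:R.

Lemma tri_indep (S : {set E}) (piv rk : E -> nat) :
  (forall e, e \in S -> (piv e < m)%N /\ b e (piv e)) ->
  (forall e e', e \in S -> e' \in S -> e' != e -> b e' (piv e) -> (rk e' < rk e)%N) ->
  mindep Ab S.
Proof.
move=> Hp Hr c Hc.
suff H : forall N e, e \in S -> (rk e < N)%N -> c e = 0.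
  by move=> e eS; exact: (H (rk e).+1 e eS (ltnSn _)).
elim=> [//|N IH] e eS ltN.
have [plt pb] := Hp e eS.
have := congr1 (fun M : 'rV_m => M 0 (Ordinal plt)) Hc.
rewrite summxE mxE (big_setD1 e eS) /= !mxE pb mulr1 big1 ?addr0 //.
move=> e' /setD1P [ne' e'S]; rewrite !mxE /=.
case be: (b e' (piv e)); last by rewrite mulr0.
by rewrite (IH e' e'S) ?mul0r // (leq_trans (Hr e e' eS e'S ne' be)).
Qed.

Lemma sum0_par (C : {set E}) :
  (forall j : 'I_m, ~~ odd #|[set e in C | b e j]|) -> \sum_(e in C) Ab e = 0.
Proof.
move=> H; apply/rowP => j; rewrite summxE !mxE.
rewrite (eq_bigr (fun e => ((b e j : nat))%:R)); last by move=> e _; rewrite mxE.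
rewrite -natr_sum.
have -> : (\sum_(e in C) (b e j : nat))%N = #|[set e in C | b e j]|.
  rewrite -sum1_card [RHS]big_mkcond [LHS]big_mkcond /=.
  by apply: eq_bigr => e _; rewrite inE; case: (e \in C); case: (b e j).
by rewrite -Fp_nat_mod // modn2 (negbTE (H j)).
Qed.
End Gen.


Definition pat := [:: 1; 2; 4; 8; 7; 11; 13; 14].
Definition patbit (x j : nat) : bool := odd (nth 0 pat x %/ 2 ^ j).
Definition keys (l : seq (nat*nat)) := map fst l.
Definition pv (l : seq (nat*nat)) x := nth 0 (map snd l) (index x (keys l)).
Definition tri_ok (l : seq (nat*nat)) : bool :=
  all (fun x => (x < 8) && (pv l x < 4) && patbit x (pv l x) &&
     all (fun y => (y == x) || ~~ patbit y (pv l x) || (index y (keys l) < index x (keys l))) (keys l))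
  (keys l).

Section Constr.
Variables k t : nat.
Hypothesis ht : 0 < t.
Definition nn := (8*k + t).+1.
Definition mm := 4*k + t.
Definition bitA (i j : nat) : bool :=
  if i < 8*k then (j < 4*k) && (j %/ 4 == i %/ 8) && patbit (i %% 8) (j %% 4)
  else if i < 8*k + t then j == 4*k + (i - 8*k)
  else ((j < 4*k) && (j %% 4 == 0)) || ((4*k <= j) && (j < 4*k + t)).
Definition AA : 'I_nn -> 'rV['F_2]_mm := Ab mm (fun (i : 'I_nn) j => bitA i j).

Definition XPb md (i : nat) : bool :=
  (8*k <= i) && match md with 0 => false | 1 => i < 8*k + t | 2 => i == 8*k + t | _ => true end.
Definition Sset (lc : nat -> seq nat) md : {set 'I_nn} :=
  [set i : 'I_nn | ((i < 8*k) && (i %% 8 \in lc (i %/ 8))) || XPb md i].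

Lemma bitA_gad i j : i < 8*k -> bitA i j = (j < 4*k) && (j %/ 4 == i %/ 8) && patbit (i %% 8) (j %% 4).
Proof. by rewrite /bitA => ->. Qed.
Lemma bitA_W i j : 8*k <= i < 8*k + t -> bitA i j = (j == 4*k + (i - 8*k)).
Proof. by case/andP => H1 H2; rewrite /bitA ltnNge H1 /= H2. Qed.
Lemma bitA_f i j : 8*k + t <= i -> bitA i j = ((j < 4*k) && (j %% 4 == 0)) || ((4*k <= j) && (j < 4*k + t)).
Proof. move=> H; rewrite /bitA ifF; last by lia. by rewrite ifF; last by lia. Qed.


Lemma card_nat n (P : nat -> bool) : #|[set i : 'I_n | P i]| = count P (iota 0 n).
Proof.
rewrite cardsE cardE /enum_mem size_filter -enumT /= -val_enum_ord count_map.
by apply: eq_count.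
Qed.

Lemma count_nn (P : pred nat) : count P (iota 0 nn) = count P (iota 0 (8*k)) + count P (iota (8*k) t) + P (8*k+t).
Proof. by rewrite /nn -addn1 iotaD count_cat iotaD count_cat /= !add0n addn0. Qed.

Lemma count_block g (P : pred nat) : g < k -> (forall i, i < 8*k -> P i -> i %/ 8 = g) ->
  count P (iota 0 (8*k)) = count (fun x => P (8*g + x)) (iota 0 8).
Proof.
move=> Hg HP.
have -> : 8*k = 8*g + (8 + 8*(k - g.+1)) by lia.
rewrite (iotaD 0 (8*g)) count_cat add0n (iotaD (8*g) 8) count_cat.
have -> : iota (8*g) 8 = map (addn (8*g)) (iota 0 8) by rewrite -iotaDl addn0.
rewrite count_map.
rewrite (@eq_in_count _ _ pred0 (iota 0 (8*g))); last first.
  move=> x; rewrite mem_iota add0n => /andP [_ Hx] /=.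
  apply/negbTE/negP => Px; have Hx8 : x < 8*k by lia.
  have := HP x Hx8 Px; lia.
rewrite (@eq_in_count _ _ pred0 (iota (8*g+8) _)); last first.
  move=> x; rewrite mem_iota => /andP [H1 H2] /=.
  apply/negbTE/negP => Px; have Hx8 : x < 8*k by lia.
  have := HP x Hx8 Px; lia.
by rewrite !count_pred0 add0n addn0.
Qed.

Lemma LS (ls : nat -> seq nat) md : (md == 0) || (md == 3) ->
  (forall g j', g < k -> j' < 4 ->
     odd (count (fun x => (x \in ls g) && patbit x j') (iota 0 8)) = (md == 3) && (j' == 0)) ->
  (\sum_(e in Sset ls md) AA e = 0)%R.
Proof.
move=> Hmd Hpar; apply: sum0_par => j.
pose Q := fun i : nat => (((i < 8*k) && (i %% 8 \in ls (i %/ 8))) || XPb md i) && bitA i j.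
have -> : [set e in Sset ls md | bitA e j] = [set i : 'I_nn | Q i].
  by apply/setP => i; rewrite !inE.
rewrite (card_nat nn Q) count_nn /Q.
have Hj := ltn_ord j; rewrite /mm in Hj.
case: (ltnP j (4*k)) => Hjk.
  have Hg : j %/ 4 < k by lia.
  rewrite (@count_block (j %/ 4)) //; last first.
    move=> i Hi /andP [_]; rewrite bitA_gad // => /andP [/andP [_ /eqP]]; lia.
  rewrite (@eq_in_count _ _ (fun x => (x \in ls (j %/ 4)) && patbit x (j %% 4)) (iota 0 8)); last first.
    move=> x; rewrite mem_iota add0n => /andP [_ Hx].
    have -> : 8 * (j %/ 4) + x < 8*k by lia.
    have -> : (8 * (j %/ 4) + x) %% 8 = x by lia.
    have -> : (8 * (j %/ 4) + x) %/ 8 = j %/ 4 by lia.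
    rewrite bitA_gad; last by lia.
    have -> : (8 * (j %/ 4) + x) %/ 8 = j %/ 4 by lia.
    have -> : (8 * (j %/ 4) + x) %% 8 = x by lia.
    rewrite /XPb; have -> : (8 * k <= 8 * (j %/ 4) + x) = false by apply/negbTE; rewrite -ltnNge; lia.
    by rewrite Hjk eqxx /= orbF.
  rewrite (@eq_in_count _ _ pred0 (iota (8*k) t)); last first.
    move=> x; rewrite mem_iota => /andP [H1 H2] /=.
    rewrite bitA_W; last by lia.
    apply/negbTE; rewrite negb_and; apply/orP; right; apply/negP => /eqP; lia.
  rewrite count_pred0 addn0 oddD Hpar //; last by lia.
  rewrite bitA_f // /XPb leq_addr /= Hjk /=.
  have -> : (8*k + t < 8*k) = false by apply/negbTE; rewrite -leqNgt leq_addr.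
  case/orP: Hmd => /eqP -> /=; first done.
  have -> : (4 * k <= j) = false by apply/negbTE; rewrite -ltnNge.
  by rewrite orbF; case: (j %% 4 == 0).
rewrite (@eq_in_count _ _ pred0 (iota 0 (8*k))); last first.
  move=> x; rewrite mem_iota add0n => /andP [_ Hx] /=.
  by rewrite bitA_gad //; apply/negbTE; rewrite !negb_and -leqNgt Hjk /= orbT.
rewrite (@eq_in_count _ _ (fun i => (md == 3) && (i == 8*k + (j - 4*k))) (iota (8*k) t)); last first.
  move=> x; rewrite mem_iota => /andP [H1 H2] /=.
  rewrite bitA_W; last by lia.
  rewrite /XPb H1 /=.
  have -> : (x < 8*k) = false by apply/negbTE; rewrite -leqNgt.
  case/orP: Hmd => /eqP -> /=; first done.
  by apply/idP/idP => /eqP H; apply/eqP; lia.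
rewrite count_pred0 add0n bitA_f // /XPb leq_addr /=.
have -> : (8*k + t < 8*k) = false by apply/negbTE; rewrite -leqNgt leq_addr.
case/orP: Hmd => /eqP -> /=.
  by rewrite count_pred0.
rewrite (@eq_in_count _ _ (pred1 (8*k + (j - 4*k)))); last by [].
rewrite count_uniq_mem ?iota_uniq // mem_iota.
move: Hj Hjk; move: (nat_of_ord j) => jj Hj Hjk.
have -> : (8 * k <= 8 * k + (jj - 4 * k) < 8 * k + t) = true by apply/andP; split; lia.
have -> : (4 * k <= jj < 4 * k + t) = true by apply/andP; split; lia.
by rewrite orbT.
Qed.

Lemma LT (lcc : nat -> seq (nat*nat)) md :
  (forall g, g < k -> tri_ok (lcc g)) -> md < 3 ->
  mindep AA (Sset (fun g => keys (lcc g)) md).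
Proof.
move=> Hok Hmd.
pose piv := fun i : 'I_nn => if i < 8*k then 4 * (i %/ 8) + pv (lcc (i %/ 8)) (i %% 8)
   else if i < 8*k + t then 4*k + (i - 8*k) else 4*k.
pose rk := fun i : 'I_nn => if i < 8*k then (index (i %% 8) (keys (lcc (i %/ 8)))).+1 else 0.
have gadP : forall i : 'I_nn, i < 8*k -> i %% 8 \in keys (lcc (i %/ 8)) ->
   [/\ i %/ 8 < k, pv (lcc (i %/ 8)) (i %% 8) < 4, patbit (i %% 8) (pv (lcc (i %/ 8)) (i %% 8)) &
   forall y, y \in keys (lcc (i %/ 8)) -> (y == i %% 8) || ~~ patbit y (pv (lcc (i %/ 8)) (i %% 8)) ||
        (index y (keys (lcc (i %/ 8))) < index (i %% 8) (keys (lcc (i %/ 8))))].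
  move=> i Hi Hx; have Hg : i %/ 8 < k by lia.
  have := Hok _ Hg; rewrite /tri_ok => /allP /(_ _ Hx) /andP [/andP [/andP [_ H1] H2] /allP H3].
  by split.
apply: (tri_indep (piv := piv) (rk := rk)).
- move=> e; rewrite inE /piv => /orP [/andP [Hlt Hx]|].
    have [Hg Hp Hb _] := gadP e Hlt Hx.
    rewrite Hlt; split; first by rewrite /mm; lia.
    rewrite bitA_gad //.
    have -> : (4 * (e %/ 8) + pv (lcc (e %/ 8)) (e %% 8)) %/ 4 = e %/ 8 by lia.
    have -> : (4 * (e %/ 8) + pv (lcc (e %/ 8)) (e %% 8)) %% 4 = pv (lcc (e %/ 8)) (e %% 8) by lia.
    rewrite eqxx Hb andbT; lia.
  rewrite /XPb => /andP [Hge Hmd'].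
  rewrite ifF; last by lia.
  have ltn_e := ltn_ord e; rewrite /nn in ltn_e.
  case: ifP => He.
    split; first by rewrite /mm; lia.
    by rewrite bitA_W ?eqxx // Hge He.
  split; first by rewrite /mm; lia.
  rewrite bitA_f; last by lia.
  apply/orP; right; apply/andP; split; lia.
- move=> e e'; rewrite !inE /piv /rk => He He' ne.
  have ltn_e := ltn_ord e; have ltn_e' := ltn_ord e'; rewrite /nn in ltn_e ltn_e'.
  have neq : (e : nat) <> e' by move=> E; move: ne; rewrite -(inj_eq val_inj) /= E eqxx.
  case/orP: He => [/andP [Hlt Hx]|He].
    have [Hg Hp Hb Hall] := gadP e Hlt Hx.
    rewrite Hlt.
    case/orP: He' => [/andP [Hlt' Hx']|He'].
      rewrite bitA_gad // Hlt' => /andP [/andP [_ /eqP Hgg] Hb'].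
      have E1 : e' %/ 8 = e %/ 8 by move: Hgg; lia.
      have E2 : (4 * (e %/ 8) + pv (lcc (e %/ 8)) (e %% 8)) %% 4 = pv (lcc (e %/ 8)) (e %% 8) by lia.
      rewrite E2 in Hb'.
      rewrite E1 in Hx' *.
      have := Hall _ Hx'; rewrite Hb' /= orbF.
      have -> : (e' %% 8 == e %% 8) = false by apply/eqP; lia.
      by [].
    move: He'; rewrite /XPb => /andP [Hge' Hmd'].
    case: (ltnP e' (8*k + t)) => H'.
      by rewrite bitA_W ?Hge' //; lia.
    by move=> _; rewrite ifF; last by lia.
  move: He; rewrite /XPb => /andP [Hge Hmd'].
  rewrite ltnNge Hge /=.
  case/orP: He' => [/andP [Hlt' Hx']|He'].
    rewrite bitA_gad //; case: ifP => _; lia.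
  move: He'; rewrite /XPb => /andP [Hge' Hmd''].
  case: ifP => He1.
    case: (ltnP e' (8*k + t)) => H'.
      by rewrite bitA_W ?Hge' //; lia.
    by move: Hmd' Hmd'' Hmd He1 H' neq; case: md => [|[|[|md]]] //=; lia.
  case: (ltnP e' (8*k + t)) => H'.
    by move: Hmd' Hmd'' Hmd He1 H' neq; case: md => [|[|[|md]]] //=; lia.
  move/negbT: He1; rewrite -leqNgt => He1. exfalso; apply: neq. apply/eqP; rewrite eqn_leq; apply/andP; split; apply: leq_trans; try eassumption; rewrite -ltnS; assumption.
Qed.
End Constr.

Definition unitc : seq (nat*nat) := [:: (0,0); (1,1); (2,2); (3,3)].
Definition B1c : seq (nat*nat) := [:: (4,2); (5,3); (0,0); (1,1)].
Definition B2c : seq (nat*nat) := [:: (6,0); (7,1); (2,2); (3,3)].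
Definition Dc (s : nat) : seq (nat*nat) :=
  match s with 0 => [:: (0,0)] | 1 | 2 | 4 => [:: (4,0); (1,1); (2,2)]
  | 3 | 5 => [:: (5,0); (1,1); (3,3)] | _ => [:: (6,0); (7,2); (1,1)] end.
Definition pls : seq (nat * seq (nat*nat)) :=
 [:: (0,[::(4,0);(1,1);(2,2)]); (0,[::(5,0);(1,1);(3,3)]); (0,[::(6,0);(7,2);(1,1)]);
     (0,[::(6,0);(2,2);(3,3)]); (0,[::(5,0);(7,1);(2,2)]); (0,[::(4,0);(7,1);(3,3)]);
     (4,[::(5,1);(6,2);(0,0)]); (1,[::(7,1);(2,2);(3,3)]); (1,[::(5,1);(6,0);(2,2)]);
     (1,[::(4,1);(6,0);(3,3)]); (4,[::(5,0);(7,2);(1,1)]); (2,[::(4,2);(5,0);(3,3)]);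
     (4,[::(6,0);(7,1);(2,2)]); (5,[::(6,0);(7,1);(3,3)])].
Definition pm (pl : nat * seq (nat*nat)) := pl.1 :: keys pl.2.
Definition pl_ok (pl : nat * seq (nat*nat)) : bool :=
  tri_ok pl.2 && (pl.1 < 8) && (pl.1 \notin keys pl.2) &&
  all (fun j => ~~ odd (count (fun x => (x \in pm pl) && patbit x j) (iota 0 8))) (iota 0 4).
Lemma pls_ok : all pl_ok pls. Proof. by []. Qed.
Definition D_ok (s : nat) : bool := tri_ok (Dc s) && (s \in keys (Dc s)) &&
  all (fun j => odd (count (fun x => (x \in keys (Dc s)) && patbit x j) (iota 0 8)) == (j == 0)) (iota 0 4).
Lemma Ds_ok : all D_ok (iota 0 8). Proof. by []. Qed.
Lemma certs_ok : tri_ok unitc && tri_ok B1c && tri_ok B2c. Proof. by []. Qed.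
Definition pp (a b : nat) : nat := find (fun pl => (a \in pm pl) && (b \in pm pl)) pls.
Lemma pp_ok : all (fun a => all (fun b => (a == b) || ((pp a b < 14) && (a \in pm (nth (0,[::]) pls (pp a b))) && (b \in pm (nth (0,[::]) pls (pp a b))))) (iota 0 8)) (iota 0 8).
Proof. by []. Qed.

Definition plane_hit (l : seq nat) (pl : nat * seq (nat*nat)) : bool :=
  has (fun a => has (fun b => (a != b) && (nth 0 l a == nth 0 l b)) (pm pl)) (pm pl).
Definition chk (l : seq nat) : bool :=
  all (plane_hit l) pls ==>
  all (fun v => count (fun y => nth 0 l y == v) (iota 0 8) <= 3) (iota 0 8) ==>
  (count (fun i => nth 0 l i == i) (iota 0 8) <= 3).
Fixpoint gen (i : nat) : seq (seq nat) :=
  match i with 0 => [:: [::]]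
  | i'.+1 => flatten (map (fun l => map (fun v => rcons l v) (iota 0 i)) (gen i')) end.
Lemma chk_all : all chk (gen 8).
Proof. Time vm_compute. reflexivity. Qed.


Lemma gen_complete i l : size l = i -> (forall j, j < i -> nth 0 l j <= j) -> l \in gen i.
Proof.
elim: i l => [|i IH] l.
  by move/eqP/nilP => ->.
case/lastP: l => [//|l v]; rewrite size_rcons => [[Hs]] Hb.
rewrite /=; apply/flattenP; exists (map (fun v => rcons l v) (iota 0 i.+1)).
  apply/mapP; exists l => //; apply: IH => // j Hj.
  by have := Hb j (ltnW Hj); rewrite nth_rcons Hs Hj.
apply/mapP; exists v => //; rewrite mem_iota add0n.
by have := Hb i (ltnSn i); rewrite nth_rcons Hs ltnn eqxx.
Qed.

Lemma index_le_nth (T : eqType) (x0 : T) (s : seq T) i : i < size s -> index (nth x0 s i) s <= i.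
Proof.
move=> Hi; rewrite -ltnS; apply: index_ltn.
have Hs : i < size (take i.+1 s) by rewrite size_take; case: ifP.
by rewrite -(nth_take x0 (ltnSn i)); apply: mem_nth.
Qed.

Lemma gadget_comb (U : finType) (key : 'I_8 -> U) :
  (forall pl, pl \in pls -> exists a b : 'I_8, [/\ (a : nat) \in pm pl, (b : nat) \in pm pl, a != b & key a = key b]) ->
  (forall x, #|[set y | key y == key x]| <= 3) ->
  #|key @: setT| <= 3.
Proof.
move=> Hpl Hsz.
pose kf := fun j : nat => key (inord j).
pose s := map kf (iota 0 8).
pose l := map (fun j => index (kf j) s) (iota 0 8).
have kfK : forall a : 'I_8, kf a = key a by move=> a; rewrite /kf inord_val.
have nth_s : forall j, j < 8 -> nth (kf 0) s j = kf j.
  by move=> j Hj; rewrite /s (nth_map 0) ?size_iota // nth_iota.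
have nth_l : forall j, j < 8 -> nth 0 l j = index (kf j) s.
  by move=> j Hj; rewrite /l (nth_map 0) ?size_iota // nth_iota.
have kf_in : forall j, j < 8 -> kf j \in s.
  by move=> j Hj; rewrite -nth_s //; apply: mem_nth; rewrite size_map size_iota.
have ind_lt : forall j, j < 8 -> index (kf j) s < 8.
  move=> j Hj; have := kf_in j Hj; rewrite -index_mem /s size_map size_iota; done.
have Hgen : l \in gen 8.
  apply: gen_complete; first by rewrite size_map size_iota.
  move=> j Hj; rewrite nth_l // -{1}(nth_s j Hj); apply: index_le_nth.
  by rewrite size_map size_iota.
have := allP chk_all l Hgen; rewrite /chk.
have -> : all (plane_hit l) pls.
  apply/allP => pl plin; have [a [b [ain bin nab kab]]] := Hpl pl plin.
  apply/hasP; exists (a : nat) => //; apply/hasP; exists (b : nat) => //.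
  by rewrite nab /= !nth_l // !kfK kab.
have -> : all (fun v => count (fun y => nth 0 l y == v) (iota 0 8) <= 3) (iota 0 8).
  apply/allP => v _.
  case: (boolP (has (fun y => nth 0 l y == v) (iota 0 8))); last first.
    by rewrite has_count -leqNgt leqn0 => /eqP ->.
  case/hasP => y0; rewrite mem_iota add0n => /andP [_ Hy0] /eqP Hv.
  rewrite (@eq_in_count _ _ (fun y => kf y == kf y0)); last first.
    move=> y; rewrite mem_iota add0n => /andP [_ Hy].
    rewrite -Hv !nth_l //; apply/eqP/eqP => [E|->//].
    by rewrite -(nth_index (kf 0) (kf_in _ Hy)) E nth_index //; apply: kf_in.
  have := Hsz (inord y0).
  suff -> : [set y | key y == key (inord y0)] = [set i : 'I_8 | (fun j : nat => kf j == kf y0) i].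
    by rewrite (card_nat 8 (fun j : nat => kf j == kf y0)).
  by apply/setP => y; rewrite !inE /kf inord_val.
move=> /= Hc.
apply: leq_trans Hc.
have -> : key @: setT = key @: [set x : 'I_8 | nth 0 l x == x].
  apply/setP => u; apply/imsetP/imsetP => [[x _ ->]|[x _ ->]]; last by exists x.
  have Hx := ltn_ord x.
  have Hr := ind_lt x Hx.
  exists (Ordinal Hr).
    rewrite inE (_ : nat_of_ord (Ordinal Hr) = index (kf x) s) // nth_l // -(nth_s _ Hr) nth_index //.
    exact: kf_in.
  rewrite -!kfK (_ : nat_of_ord (Ordinal Hr) = index (kf x) s) // -(nth_s _ Hr) nth_index //.
  exact: kf_in.
apply: leq_trans (leq_imset_card _ _) _.

by rewrite (card_nat 8 (fun j : nat => nth 0 l j == j)).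
Qed.



Lemma card_bigcup_le (T : finType) (F : nat -> {set T}) n :
  #|\bigcup_(g < n) F g| <= \sum_(g < n) #|F g|.
Proof.
elim: n => [|n IH]; first by rewrite !big_ord0 cards0.
rewrite !big_ord_recr /= cardsU.
apply: leq_trans (leq_subr _ _) _.
by rewrite leq_add2r.
Qed.

Lemma card_bigcup_lt (T : finType) (F : nat -> {set T}) n g h :
  g < h -> h < n -> F g :&: F h != set0 ->
  #|\bigcup_(i < n) F i| < \sum_(i < n) #|F i|.
Proof.
elim: n => [|n IH] Hgh Hhn Hne; first by [].
rewrite !big_ord_recr /= cardsU.
case: (ltnP h n) => Hh.
  apply: leq_ltn_trans (leq_subr _ _) _.
  by rewrite ltn_add2r; apply: IH.
have Ehn : h = n by apply/eqP; rewrite eqn_leq Hh -ltnS Hhn.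
have Hgn : g < n by rewrite -Ehn.
have Hsub : F g \subset \bigcup_(i < n) F i.
  by apply: (bigcup_sup (Ordinal Hgn)).
have Hpos : 0 < #|(\bigcup_(i < n) F i) :&: F n|.
  have Hs2 : F g :&: F h \subset (\bigcup_(i < n) F i) :&: F n by rewrite Ehn; exact: (setSI _ Hsub).
  by apply: leq_trans (subset_leq_card Hs2); rewrite card_gt0.
have Hle : #|(\bigcup_(i < n) F i) :&: F n| <= #|F n| by apply: subset_leq_card; apply: subsetIr.
have := card_bigcup_le F n.
move: Hpos Hle; move: #|_ :&: _| #|F n| #|\bigcup_(i < n) F i| (\sum_(i < n) #|F i|) => a b c d.
lia.
Qed.

Lemma ar_div (n kk : nat) : n < 8 * kk -> n %/ 8 < kk.
Proof. lia. Qed.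

Lemma count_mod8 (p : pred nat) kk : count (fun i => p (i %% 8)) (iota 0 (8*kk)) = kk * count p (iota 0 8).
Proof.
elim: kk => [|kk IH]; first by rewrite muln0.
rewrite mulnSr iotaD count_cat IH add0n.
have -> : iota (8*kk) 8 = map (addn (8*kk)) (iota 0 8) by rewrite -iotaDl addn0.
rewrite count_map mulSn addnC; congr (_ + _).
apply: eq_in_count => x; rewrite mem_iota add0n /= => Hx.
by have -> : (8 * kk + x) %% 8 = x by lia.
Qed.

Lemma cover_chk : all (fun x => (x \in keys B1c) || (x \in keys B2c)) (iota 0 8).
Proof. by []. Qed.

Section Main.
Variables k t : nat.
Hypothesis ht : 0 < t.
Local Notation A := (AA (k:=k) (t:=t)).
Local Notation S := (Sset k t).

Definition ig (g x : nat) : 'I_(nn k t) := inord (8*g + x).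
Lemma ig_val g x : g < k -> x < 8 -> (ig g x : nat) = 8*g + x.
Proof. by move=> Hg Hx; rewrite inordK //; rewrite /nn; lia. Qed.

Lemma ne_ig (i : 'I_(nn k t)) g x : g < k -> x < 8 -> (i != ig g x) = ((i : nat) != 8*g + x).
Proof. by move=> Hg Hx; rewrite -(inj_eq val_inj) /= ig_val. Qed.

Lemma ar1 (g a : nat) : g < k -> a < 8 -> [/\ 8*g + a < 8*k, (8*g+a) %/ 8 = g & (8*g + a) %% 8 = a].
Proof. move=> *; split; lia. Qed.

Lemma ar2 (i g a : nat) : i %/ 8 = g -> (i == 8*g + a) = (i %% 8 == a).
Proof. by move=> H; apply/idP/idP => /eqP E; apply/eqP; lia. Qed.

Definition PS g pl := S (fun h => if h == g then pm pl else [::]) 0.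

Lemma plane_circ g pl : g < k -> pl \in pls -> mcircuit A (PS g pl).
Proof.
case: pl => a c; set pl := (a, c); move=> Hg Hpl.
have /andP [/andP [/andP [Htri H1] Hn] Hpar] := allP pls_ok pl Hpl.
apply: (one_removal (e0 := ig g pl.1)).
- apply: (LS ht) => // h j' Hh Hj'.
  case: (eqVneq h g) => [_|ne].
    by have := allP Hpar j'; rewrite mem_iota add0n => /(_ Hj') /negbTE.
  by rewrite (@eq_count _ _ pred0) ?count_pred0.
- rewrite inE ig_val //.
  have [-> -> ->] := ar1 Hg H1.
  by rewrite eqxx /pm in_cons eqxx.
have -> : PS g pl :\ ig g pl.1 = S (fun h => keys (if h == g then pl.2 else [::])) 0.
  apply/setP => i; rewrite !inE /XPb !andbF !orbF.
  case: (ltnP i (8*k)) => Hi /=; last by rewrite andbF.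
  case: (eqVneq (i %/ 8) g) => [Eg|ne] /=; last by rewrite andbF.
  rewrite (ne_ig _ Hg H1) (ar2 pl.1 Eg).
  rewrite /pm in_cons.
  case: (eqVneq (i %% 8) pl.1) => [E|] //=.
  by rewrite E (negbTE Hn).
apply: (LT ht) => // h Hh.
by case: (h == g).
Qed.

Definition fi : 'I_(nn k t) := ord_max.
Lemma fi_val : (fi : nat) = 8*k + t. Proof. by []. Qed.

Definition ZS (sg : nat -> nat) := S (fun h => keys (Dc (sg h))) 3.

Lemma Dok s : s < 8 -> D_ok s.
Proof. by move=> Hs; apply: (allP Ds_ok); rewrite mem_iota. Qed.

Lemma Z_circ sg : (forall h, h < k -> sg h < 8) -> mcircuit A (ZS sg).
Proof.
move=> Hsg.
apply: (one_removal (e0 := fi)).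
- apply: (LS ht) => // h j' Hh Hj'.
  have /andP [_ /allP Hp] := Dok (Hsg h Hh).
  by have := Hp j'; rewrite mem_iota add0n Hj' => /(_ isT) /eqP.
- rewrite inE fi_val /XPb leq_addr /=; apply/orP; right; done.
have -> : ZS sg :\ fi = S (fun h => keys (Dc (sg h))) 1.
  apply/setP => i; rewrite !inE /XPb.
  have Hi := ltn_ord i; rewrite /nn in Hi.
  rewrite -(inj_eq val_inj) /= andbT.
  move: Hi; move: (nat_of_ord i) => n Hn.
  case: (ltnP n (8*k)) => H /=.
    rewrite orbF.
    by have -> : n != 8 * k + t by apply/eqP => E; move: H; rewrite E ltnNge leq_addr.
  rewrite andbT ltn_neqAle; by move: Hn; rewrite ltnS => ->; rewrite andbT.
apply: (LT ht) => // h Hh.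
by have /andP [/andP [] ] := Dok (Hsg h Hh).
Qed.

Lemma ig_inj g : g < k -> injective (fun y : 'I_8 => ig g y).
Proof.
move=> Hg y y' /(congr1 val); rewrite /= !ig_val // => E.
by apply: ord_inj; move: E; move: (nat_of_ord y) (nat_of_ord y') => a b; lia.
Qed.

Lemma in_PS g pl (u : 'I_(nn k t)) : g < k -> u \in PS g pl ->
  exists a : 'I_8, u = ig g a /\ (a : nat) \in pm pl.
Proof.
move=> Hg; rewrite inE /XPb andbF orbF => /andP [Hu].
case: (eqVneq (u %/ 8) g) => [Eg|//] Ha.
have Ha8 : u %% 8 < 8 by rewrite ltn_mod.
exists (Ordinal Ha8); split => //.
apply: ord_inj; rewrite ig_val //= -Eg.
by rewrite {1}(divn_eq u 8) mulnC.
Qed.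

Lemma gadget_bound (P : {set {set 'I_(nn k t)}}) g : g < k ->
  partition P [set: 'I_(nn k t)] -> rainbow_circuit_free A P ->
  (forall B, B \in P -> #|B| <= 3) ->
  #|(fun x : 'I_8 => pblock P (ig g x)) @: setT| <= 3.
Proof.
move=> Hg Hpart Hrf H3.
have tI := partition_trivIset Hpart.
have cov : forall i, i \in cover P by move=> i; rewrite (cover_partition Hpart) inE.
apply: gadget_comb.
  move=> pl Hpl.
  have Hc := plane_circ Hg Hpl.
  have [B [BP HB]] : exists B, B \in P /\ 1 < #|PS g pl :&: B|.
    case: (boolP [exists B in P, 1 < #|PS g pl :&: B|]) => [/existsP [B /andP [BP HB]]|Hn].
      by exists B.
    exfalso; apply: (Hrf _ Hc) => B BP; move: Hn; rewrite negb_exists => /forallP /(_ B).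
    by rewrite BP /= -leqNgt.
  have [u [v [uin vin neuv]]] := card_gt1P HB.
  move: uin vin; rewrite !in_setI => /andP [uP uB] /andP [vP vB].
  have [a [Eu ain]] := in_PS Hg uP.
  have [b [Ev bin]] := in_PS Hg vP.
  exists a, b; split => //.
    by apply: contraNneq neuv => E; rewrite Eu Ev E.
  by rewrite -Eu -Ev (def_pblock tI BP uB) (def_pblock tI BP vB).
move=> x.
have PB : pblock P (ig g x) \in P by apply: pblock_mem.
apply: leq_trans (H3 _ PB).
rewrite -(card_imset _ (ig_inj Hg)).
apply: subset_leq_card; apply/subsetP => z /imsetP [y]; rewrite inE => /eqP Ey ->.
by rewrite -Ey mem_pblock.
Qed.

Lemma color_bound (P : {set {set 'I_(nn k t)}}) :
  partition P [set: 'I_(nn k t)] -> rainbow_circuit_free A P ->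
  (forall B, B \in P -> #|B| <= 3) -> #|P| <= 3 * k + t.
Proof.
move=> Hpart Hrf H3.
have tI := partition_trivIset Hpart.
have cov : forall i, i \in cover P by move=> i; rewrite (cover_partition Hpart) inE.
pose Qg := fun g : nat => (fun x : 'I_8 => pblock P (ig g x)) @: setT.
pose Xs := [set i : 'I_(nn k t) | 8 * k <= i].
pose QX := [set B in P | B \subset Xs].
pose QG := \bigcup_(g < k) Qg g.
have Hsum : \sum_(g < k) #|Qg g| <= 3 * k.
  have -> : 3 * k = \sum_(g < k) 3 by rewrite sum_nat_const card_ord mulnC.
  by apply: leq_sum => g _; apply: gadget_bound.
have Hcov : P \subset QG :|: QX.
  apply/subsetP => B BP.
  case: (boolP [exists i in B, i < 8 * k]) => [/existsP [i /andP [iB Hi]]|Hn].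
    have Hg : i %/ 8 < k by apply: ar_div.
    have Hx : i %% 8 < 8 by rewrite ltn_mod.
    apply/setUP; left; apply/bigcupP; exists (Ordinal Hg) => //.
    apply/imsetP; exists (Ordinal Hx) => //.
    have -> : ig (Ordinal Hg) (Ordinal Hx) = i.
      apply: ord_inj; rewrite ig_val //=.
      by rewrite {3}(divn_eq i 8) mulnC.
    by rewrite (def_pblock tI BP iB).
  apply/setUP; right; rewrite inE BP /=.
  apply/subsetP => i iB; rewrite inE leqNgt.
  by move: Hn; rewrite negb_exists => /forallP /(_ i); rewrite iB.
have HP : #|P| <= #|QG| + #|QX|.
  apply: leq_trans (subset_leq_card Hcov) _.
  by rewrite cardsU leq_subr.
have QXP : QX \subset P by apply/subsetP => B; rewrite inE => /andP [].
have tQX : trivIset QX := trivIsetS QXP tI.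
have sumQX : \sum_(B in QX) #|B| = #|cover QX| by apply/eqP.
have covQX : cover QX \subset Xs.
  by apply/bigcupsP => B; rewrite inE => /andP [].
have QXle : #|QX| <= \sum_(B in QX) #|B|.
  rewrite -sum1_card; apply: leq_sum => B; rewrite inE => /andP [BP _].
  by rewrite card_gt0; apply: (partition_neq0 Hpart BP).
have cardXs : #|Xs| = t.+1.
  rewrite /Xs (card_nat (nn k t) (fun i => 8 * k <= i)) count_nn.
  rewrite (@eq_in_count _ _ pred0 (iota 0 (8*k))); last first.
    by move=> x; rewrite mem_iota add0n /= => Hx; rewrite leqNgt Hx.
  rewrite (@eq_in_count _ _ predT (iota (8*k) t)); last first.
    by move=> x; rewrite mem_iota => /andP [].
  by rewrite count_pred0 count_predT size_iota leq_addr addn1.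
pose Z0 := ZS (fun _ => 0).
have Hz : mcircuit A Z0 by apply: Z_circ.
have [B0 [B0P HB0]] : exists B, B \in P /\ 1 < #|Z0 :&: B|.
  case: (boolP [exists B in P, 1 < #|Z0 :&: B|]) => [/existsP [B /andP [BP HB]]|Hn].
    by exists B.
  exfalso; apply: (Hrf _ Hz) => B BP; move: Hn; rewrite negb_exists => /forallP /(_ B).
  by rewrite BP /= -leqNgt.
have [u [v [uin vin neuv]]] := card_gt1P HB0.
move: uin vin; rewrite !in_setI => /andP [uZ uB] /andP [vZ vB].
have caseA : forall w w', w \in B0 -> w' \in B0 -> w != w' -> 8 * k <= w -> #|QX| <= t.
  move=> w w' wB w'B nww' Hw.
  have Hcx : #|cover QX| <= #|Xs| by apply: subset_leq_card.
  case: (boolP (B0 \in QX)) => HB0X.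
    have H2 : 1 < #|B0| by apply/card_gt1P; exists w, w'.
    have HR : #|QX :\ B0| <= \sum_(B in QX :\ B0) #|B|.
      rewrite -sum1_card; apply: leq_sum => B; rewrite !inE => /andP [_ /andP [BP _]].
      by rewrite card_gt0; apply: (partition_neq0 Hpart BP).
    have : #|QX| < \sum_(B in QX) #|B|.
      rewrite (big_setD1 B0 HB0X) /= (cardsD1 B0 QX) HB0X.
      by apply: leq_trans (leq_add H2 HR); rewrite /= add1n.
    rewrite sumQX cardXs in Hcx * => H; rewrite -ltnS; exact: leq_trans H Hcx.
  have wnc : w \notin cover QX.
    apply/negP => /bigcupP [B]; rewrite inE => /andP [BP BX] wB'.
    have EB : B = B0 by rewrite -(def_pblock tI BP wB') (def_pblock tI B0P wB).
    by move: HB0X; rewrite -EB inE BP BX.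
  have Hcx2 : cover QX \subset Xs :\ w.
    by apply/subsetP => x xc; rewrite in_setD1 (subsetP covQX x xc) andbT; apply: contraNneq wnc => <-.
  have := subset_leq_card Hcx2.
  have wX : w \in Xs by rewrite inE.
  have E : #|Xs :\ w| = t by move: cardXs; rewrite (cardsD1 w Xs) wX add1n => [[]].
  rewrite E => Hc2.
  by apply: leq_trans QXle _; rewrite sumQX.
have HQG : #|QG| <= 3 * k by apply: leq_trans (card_bigcup_le _ _) Hsum.
case: (leqP (8 * k) u) => Hu.
  apply: leq_trans HP _; apply: leq_add => //; exact: caseA uB vB neuv Hu.
case: (leqP (8 * k) v) => Hv.
  apply: leq_trans HP _; apply: leq_add => //; apply: caseA vB uB _ Hv; by rewrite eq_sym.
have inQg : forall B (w : 'I_(nn k t)), B \in P -> w \in B -> w < 8 * k -> w %% 8 = 0 -> B \in Qg (w %/ 8).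
  move=> B w BP wB Hw H0.
  have Hg : w %/ 8 < k by apply: ar_div.
  apply/imsetP; exists ord0 => //.
  have -> : ig (w %/ 8) (@ord0 7) = w.
    apply: ord_inj; rewrite ig_val //= addn0.
    by rewrite {2}(divn_eq w 8) H0 addn0 mulnC.
  by rewrite (def_pblock tI BP wB).
have Hu8 : u %% 8 = 0.
  move: uZ; rewrite inE /XPb Hu andbT (leqNgt (8*k)) Hu /= orbF.
  by rewrite inE => /eqP.
have Hv8 : v %% 8 = 0.
  move: vZ; rewrite inE /XPb Hv andbT (leqNgt (8*k)) Hv /= orbF.
  by rewrite inE => /eqP.
have Hgu : u %/ 8 < k by apply: ar_div.
have Hgv : v %/ 8 < k by apply: ar_div.
have Hne : Qg (u %/ 8) :&: Qg (v %/ 8) != set0.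
  apply/set0Pn; exists B0; rewrite inE; apply/andP; split; by apply: inQg.
have HQG2 : #|QG| < 3 * k.
  apply: leq_trans Hsum.
  case: (ltngtP (u %/ 8) (v %/ 8)) => [lt|gt|eq].
  - exact: card_bigcup_lt lt Hgv Hne.
  - by apply: card_bigcup_lt gt Hgu _; rewrite setIC.
  - exfalso; move/eqP: neuv; apply; apply: ord_inj.
    by rewrite (divn_eq u 8) (divn_eq v 8) eq Hu8 Hv8.
have HQX : #|QX| <= t.+1.
  by rewrite -cardXs; apply: leq_trans QXle _; rewrite sumQX; apply: subset_leq_card.
apply: leq_trans HP _.
by have := leq_add HQG2 HQX; rewrite addSn addnS ltnS.

Qed.

Lemma rank_ok : mrank_is A (4*k + t).
Proof.
have /andP [/andP [Tu T1] T2] := certs_ok.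
split; last by move=> S' HS'; exact: (indep_card HS').
exists (S (fun _ => keys unitc) 1); split; first by apply: (LT ht).
rewrite /Sset (card_nat _ (fun i => ((i < 8*k) && (i %% 8 \in keys unitc)) || XPb k t 1 i)) count_nn.
rewrite (@eq_in_count _ _ (fun i => (fun x => x \in keys unitc) (i %% 8)) (iota 0 (8*k))); last first.
  move=> x; rewrite mem_iota add0n /= => Hx.
  by rewrite Hx /XPb leqNgt Hx /= orbF.
rewrite count_mod8.
rewrite (@eq_in_count _ _ predT (iota (8*k) t)); last first.
  move=> x; rewrite mem_iota /XPb => /andP [H1 H2] /=.
  by rewrite H1 H2 orbT.
rewrite count_predT size_iota /XPb ltnn andbF orbF.
have -> : (8 * k + t < 8 * k) = false by apply/negbTE; rewrite -leqNgt leq_addr.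
by rewrite addn0 mulnC.
Qed.

Lemma cover_ok : mcoverable A 2.
Proof.
have /andP [/andP [Tu T1] T2] := certs_ok.
exists [:: S (fun _ => keys B1c) 1; S (fun _ => keys B2c) 2]; split; first by [].
split.
  move=> X; rewrite !inE => /orP [/eqP ->|/eqP ->]; by apply: (LT ht).
move=> e.
have He := ltn_ord e; rewrite /nn in He.
case: (ltnP e (8*k)) => H.
  have He8 : e %% 8 \in iota 0 8 by rewrite mem_iota add0n ltn_mod.
  case/orP: (allP cover_chk _ He8) => Hin.
    by exists (S (fun _ => keys B1c) 1); [rewrite mem_head | rewrite in_set H Hin].
  by exists (S (fun _ => keys B2c) 2); [rewrite !inE eqxx orbT | rewrite in_set H Hin].
case: (ltnP e (8*k + t)) => H2.
  by exists (S (fun _ => keys B1c) 1); [rewrite mem_head | rewrite in_set /XPb H H2 orbT].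
exists (S (fun _ => keys B2c) 2); [by rewrite !inE eqxx orbT | rewrite in_set /XPb H /=].
by rewrite ltnNge H /= eqn_leq H2 andbT -ltnS.
Qed.

Lemma conn_ok : mconnected A.
Proof.
move=> x y nxy.
case: (boolP [&& x < 8*k, y < 8*k & x %/ 8 == y %/ 8]) => [/and3P [Hx Hy /eqP Exy]|Hn].
  have Hg : x %/ 8 < k by apply: ar_div.
  have Ha : x %% 8 \in iota 0 8 by rewrite mem_iota add0n ltn_mod.
  have Hb : y %% 8 \in iota 0 8 by rewrite mem_iota add0n ltn_mod.
  have := allP (allP pp_ok _ Ha) _ Hb.
  have -> : (x %% 8 == y %% 8) = false.
    apply/negbTE; apply: contra nxy => /eqP E; apply/eqP; apply: ord_inj.
    by rewrite (divn_eq x 8) (divn_eq y 8) Exy E.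
  move=> /= /andP [/andP [Hpp ain] bin].
  set pl := nth _ pls _ in ain bin.
  have Hpl : pl \in pls by apply: mem_nth.
  exists (PS (x %/ 8) pl); split; first exact: plane_circ.
  by split; rewrite inE ?Hx ?Hy ?Exy eqxx ?ain ?bin.
pose sg := fun h => if (x < 8*k) && (h == x %/ 8) then x %% 8
   else if (y < 8*k) && (h == y %/ 8) then y %% 8 else 0.
have Hsg : forall h, h < k -> sg h < 8.
  by move=> h _; rewrite /sg; case: ifP => _; [rewrite ltn_mod|case: ifP => _; rewrite ?ltn_mod].
have inD : forall s, s < 8 -> s \in keys (Dc s).
  by move=> s Hs; have /andP [/andP [_ ]] := Dok Hs.
exists (ZS sg); split; first exact: Z_circ.
split; rewrite inE /XPb.
  case: (ltnP x (8*k)) => Hx /=; last done.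
  by rewrite orbF /sg Hx eqxx /= inD // ltn_mod.
case: (ltnP y (8*k)) => Hy /=; last done.
rewrite orbF /sg.
have -> : (x < 8 * k) && (y %/ 8 == x %/ 8) = false.
  apply/negbTE; apply: contra Hn => /andP [Hx E]; by rewrite Hx Hy eq_sym E.
by rewrite /= Hy eqxx /= inD // ltn_mod.
Qed.

End Main.

Theorem corollary8 (r : nat) : (0 < r)%N ->
  exists (n m : nat) (A : 'I_n -> 'rV['F_2]_m),
    mrank_is A r /\ mcoverable A 2 /\ mconnected A /\
    forall P : {set {set 'I_n}},
      partition P [set: 'I_n] ->
      rainbow_circuit_free A P ->
      (forall B, B \in P -> (#|B| <= 3)%N) ->
      (#|P| <= (6 * r + 6) %/ 7)%N.
Proof.
move=> Hr.
have [k [t [ht t4 Er]]] : exists k t, [/\ 0 < t, t <= 4 & 4 * k + t = r].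
  exists ((r - 1) %/ 4), (r - 4 * ((r - 1) %/ 4)); split; lia.
rewrite -Er.
exists (nn k t), (mm k t), (AA (k:=k) (t:=t)).
split; first exact: rank_ok.
split; first exact: cover_ok.
split; first exact: conn_ok.
move=> P Hpart Hrf H3.
apply: leq_trans (color_bound ht Hpart Hrf H3) _.
rewrite leq_divRL //.
lia.
Qed.
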